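(* Let $S$ be an idempotent semiring and define the relation $\sigma^*$ on $S$ by: $a\,\sigma^*\, b$ if and only if there exists $x\in S$ such that $axbxa=axbxa+a+axbxa$ and $bxaxb=bxaxb+b+bxaxb$. Then $\sigma^*$ is the least distributive lattice congruence on $S$.
   Context: An idempotent semiring is an algebra $(S,+,\cdot)$ with two binary operations such that $(S,+)$ and $(S,\cdot)$ are bands (associative, with $x+x=x$ and $xx=x$), and both distributive laws $x(y+z)=xy+xz$ and $(x+y)z=xz+yz$ hold; addition is not assumed commutative. A distributive lattice congruence on $S$ is a congruence $\rho$ such that $S/\rho$ is a distributive lattice, i.e. $S/\rho$ satisfies $x+y\approx y+x$, $xy\approx yx$ and $x+xy\approx x$. *)

(* Defs.v *)
From Stdlib Require Import Relations.
Set Implicit Arguments.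

(* An idempotent semiring: (S,+) and (S,.) are bands (associative,
   idempotent), both distributive laws hold; + is not assumed commutative. *)
Record idem_semiring (S : Type) (add mul : S -> S -> S) : Prop := {
  add_assoc : forall x y z, add x (add y z) = add (add x y) z;
  add_idem  : forall x, add x x = x;
  mul_assoc : forall x y z, mul x (mul y z) = mul (mul x y) z;
  mul_idem  : forall x, mul x x = x;
  distr_l   : forall x y z, mul x (add y z) = add (mul x y) (mul x z);
  distr_r   : forall x y z, mul (add x y) z = add (mul x z) (mul y z)
}.

Definition congruence (S : Type) (add mul : S -> S -> S) (rho : relation S)
  : Prop :=
  equivalence S rho /\
  (forall a b c d, rho a b -> rho c d -> rho (add a c) (add b d)) /\
  (forall a b c d, rho a b -> rho c d -> rho (mul a c) (mul b d)).

Definition dl_congruence (S : Type) (add mul : S -> S -> S) (rho : relation S)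
  : Prop :=
  congruence add mul rho /\
  (forall x y, rho (add x y) (add y x)) /\
  (forall x y, rho (mul x y) (mul y x)) /\
  (forall x y, rho (add x (mul x y)) x).

Definition sigma_star (S : Type) (add mul : S -> S -> S) (a b : S) : Prop :=
  exists x : S,
    let p := mul a (mul x (mul b (mul x a))) in
    let q := mul b (mul x (mul a (mul x b))) in
    p = add (add p a) p /\ q = add (add q b) q.

(* Main.v *)
Require Import Defs.
From Stdlib Require Import Relations Setoid.

Section Band.
Variables (S : Type) (f : S -> S -> S).
Hypothesis fA : forall x y z, f x (f y z) = f (f x y) z.
Hypothesis fI : forall x, f x x = x.
Ltac nrm := repeat rewrite <- fA.

Lemma s1 a r : f a (f a r) = f a r.
Proof. rewrite fA, fI; reflexivity. Qed.
Lemma s2 a b : f a (f b (f a b)) = f a b.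
Proof. rewrite (fA a b), fI; reflexivity. Qed.
Lemma s2r a b r : f a (f b (f a (f b r))) = f a (f b r).
Proof. rewrite (fA a b (f a (f b r))), (fA a b r), fA, fI; reflexivity. Qed.

Lemma bL1 x y z : x = f (f (f x y) z) x -> x = f (f x y) x.
Proof.
  intro H. set (g := f x y) in *.
  assert (E : f g x = x).
  { transitivity (f g (f (f g z) x)). { f_equal; exact H. }
    rewrite (fA g (f g z) x), (fA g g z), fI. symmetry; exact H. }
  symmetry; exact E.
Qed.

Lemma bL2 x y z : x = f (f (f x z) y) x -> x = f (f x y) x.
Proof.
  intro H. 
  assert (E : f x (f y x) = x).
  { transitivity (f (f (f (f x z) y) x) (f y x)). { f_equal; exact H. }
    nrm. rewrite s2. symmetry. rewrite H at 1. nrm. reflexivity. }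
  rewrite fA in E. symmetry; exact E.
Qed.

Definition bge (u v : S) := u = f (f u v) u.

Lemma s3r a b c r : f a (f b (f c (f a (f b (f c r))))) = f a (f b (f c r)).
Proof.
  transitivity (f (f a (f b c)) (f (f a (f b c)) r)). nrm; reflexivity.
  rewrite s1. nrm. reflexivity.
Qed.

Lemma bge_refl u : bge u u.
Proof. unfold bge; rewrite !fI; reflexivity. Qed.

Lemma bge_trans u v w : bge u v -> bge v w -> bge u w.
Proof.
  unfold bge; intros H1 H2.
  assert (H3 : u = f (f (f u (f v w)) v) u).
  { transitivity (f (f u v) u). exact H1.
    rewrite H2 at 1. nrm. reflexivity. }
  apply bL1 in H3. rewrite fA in H3. apply bL2 in H3. exact H3.
Qed.

Lemma bge_eq u u' v v' : u = u' -> v = v' -> bge u v -> bge u' v'.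
Proof. intros -> ->; auto. Qed.

Lemma ctx3 u b r : u = f (f u b) u -> f u (f b (f u r)) = f u r.
Proof. intro H. rewrite (fA u b), fA, <- H; reflexivity. Qed.
Lemma ctx3e u b : u = f (f u b) u -> f u (f b u) = u.
Proof. intro H. rewrite fA, <- H; reflexivity. Qed.

Lemma bge_sum u a b : bge u a -> bge u b -> bge u (f a b).
Proof.
  unfold bge; intros Ha Hb.
  set (A := f u a). set (B := f b u).
  assert (E1 : A = f (f (f A (f u B)) u) A).
  { unfold A, B. nrm. rewrite !s1. rewrite (ctx3 u b a Hb). rewrite s2. reflexivity. }
  apply bL1 in E1. rewrite fA in E1. apply bL2 in E1.
  assert (E2 : u = f (f (f u (f A B)) A) u).
  { transitivity (f (f u A) u).
    { unfold A. nrm. rewrite s1. rewrite fA. exact Ha. }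
    rewrite E1 at 1. nrm. reflexivity. }
  apply bL1 in E2.
  transitivity (f (f u (f A B)) u); [exact E2|].
  unfold A, B. nrm. rewrite ?fI, ?s1. reflexivity.
Qed.

Lemma bge_l a b : bge (f a b) a.
Proof. unfold bge. nrm. rewrite s1, s2. reflexivity. Qed.
Lemma bge_r a b : bge (f a b) b.
Proof. unfold bge. nrm. rewrite s1, s2. reflexivity. Qed.
End Band.

Section SR.
Variables (S : Type) (add mul : S -> S -> S).
Hypothesis HS : idem_semiring add mul.
Local Notation "x + y" := (add x y).
Local Notation "x * y" := (mul x y).
Let aA := add_assoc HS.
Let aI := add_idem HS.
Let mA := mul_assoc HS.
Let mI := mul_idem HS.
Let dl := distr_l HS.
Let dr := distr_r HS.
Ltac mn := repeat rewrite <- mA.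
Ltac an := repeat rewrite <- aA.

Definition ge := bge S add.

Lemma ge_refl u : ge u u. Proof. apply (@bge_refl S add); auto. Qed.
Lemma ge_trans u v w : ge u v -> ge v w -> ge u w.
Proof. apply (@bge_trans S add); auto. Qed.
Lemma ge_eq u u' v v' : u = u' -> v = v' -> ge u v -> ge u' v'.
Proof. intros -> ->; auto. Qed.
Lemma ge_sum u a b : ge u a -> ge u b -> ge u (a + b).
Proof. apply (@bge_sum S add); auto. Qed.
Lemma ge_l a b : ge (a + b) a. Proof. apply (@bge_l S add); auto. Qed.
Lemma ge_r a b : ge (a + b) b. Proof. apply (@bge_r S add); auto. Qed.

Lemma ge_mulL w u v : ge u v -> ge (w * u) (w * v).
Proof. unfold ge, bge. intro H. rewrite <- !dl. rewrite <- H. reflexivity. Qed.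
Lemma ge_mulR w u v : ge u v -> ge (u * w) (v * w).
Proof. unfold ge, bge. intro H. rewrite <- !dr. rewrite <- H. reflexivity. Qed.
Lemma ge_mul u v u' v' : ge u v -> ge u' v' -> ge (u * u') (v * v').
Proof. intros H H'. apply ge_trans with (v * u'). apply ge_mulR; auto. apply ge_mulL; auto. Qed.

Lemma ge_sq g h : ge (g + h) (g * h).
Proof.
  apply ge_eq with ((g + h) * (g + h)) (g * h); [apply mI|reflexivity|].
  rewrite dr, !dl. apply ge_trans with (g * g + g * h). apply ge_l. apply ge_r.
Qed.

Lemma ruleC s u g h w : ge s (u * (g * w)) -> ge s (u * (h * w)) -> ge s (u * ((g * h) * w)).
Proof.
  intros H1 H2. apply ge_trans with (u * ((g + h) * w)).
  - apply ge_eq with s (u * (g * w) + u * (h * w)); auto. rewrite dr, dl; reflexivity.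
    apply ge_sum; auto.
  - apply ge_mulL, ge_mulR, ge_sq.
Qed.


Let ms1 := s1 S mul mA mI.
Let ms2 := s2 S mul mA mI.
Let ms2r := s2r S mul mA mI.
Let ms3r := s3r S mul mA mI.

Lemma reg_easy x Y Z : ge (x*(Y*(x*(Z*x)))) (x*(Y*(Z*x))).
Proof.
  apply ge_trans with ((x*Y) * ((x*((Y*Z)*x)) * (Z*x))).
  - apply ge_eq with ((x*Y)*((x*((Y+Z)*x))*(Z*x))) ((x*Y) * ((x*((Y*Z)*x)) * (Z*x))).
    + rewrite dr, dl, dr, dl. mn. rewrite ms2r. rewrite (ms2r x Z x). apply aI.
    + reflexivity.
    + apply ge_mulL, ge_mulR, ge_mulL, ge_mulR, ge_sq.
  - apply ge_eq with (x*(Y*(Z*x))) (x*(Y*(Z*x))); [|reflexivity|apply ge_refl].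
    mn. rewrite ms2r. rewrite (ms2 Z x). reflexivity.
Qed.

Lemma reg_hard x Y Z : ge (x*(Y*(Z*x))) (x*(Y*(x*(Z*x)))).
Proof.
  assert (H1 : ge (x*(Y*(Z*x))) ((x*Y) * ((x*Z) * (Y*(Z*x))))).
  { apply ruleC.
    - apply ge_eq with (x*(Y*(Z*x))) (x*(Y*(Z*x))); [reflexivity| |apply ge_refl].
      mn. rewrite ms2r. reflexivity.
    - apply ge_eq with (x*(Y*(Z*x))) (x*(Y*(Z*x))); [reflexivity| |apply ge_refl].
      mn. rewrite (ms2r Y Z x). reflexivity. }
  assert (H2 : ge (x*(Y*(Z*x))) ((x*(Y*Z)) * ((Y*x) * (Z*x)))).
  { apply ruleC.
    - apply ge_eq with (x*(Y*(Z*x))) (x*(Y*(Z*x))); [reflexivity| |apply ge_refl].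
      mn. rewrite (ms2r Y Z x). reflexivity.
    - apply ge_eq with (x*(Y*(Z*x))) (x*(Y*(Z*x))); [reflexivity| |apply ge_refl].
      mn. rewrite (ms2 Z x). reflexivity. }
  assert (H3 : ge (x*(Y*(Z*x))) (x * (((Y*(x*(Z*Y))) * (Y*(Z*(Y*x)))) * (Z*x)))).
  { apply ruleC.
    - apply ge_eq with (x*(Y*(Z*x))) ((x*Y) * ((x*Z) * (Y*(Z*x)))); [reflexivity| |exact H1].
      mn. reflexivity.
    - apply ge_eq with (x*(Y*(Z*x))) ((x*(Y*Z)) * ((Y*x) * (Z*x))); [reflexivity| |exact H2].
      mn. reflexivity. }
  apply ge_eq with (x*(Y*(Z*x))) (x * (((Y*(x*(Z*Y))) * (Y*(Z*(Y*x)))) * (Z*x))); [reflexivity| |exact H3].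
  mn. rewrite (ms1 Y). rewrite (ms2r Z Y). rewrite (ms3r Y x Z x). reflexivity.
Qed.

Definition Pw a x b := a*(x*(b*(x*a))).
Definition sg a b := exists x, ge (Pw a x b) a /\ ge (Pw b x a) b.

Lemma sg_iff a b : sigma_star add mul a b <-> sg a b.
Proof. split; intros [x H]; exists x; exact H. Qed.

Lemma Pw_mono A a z x B b : ge A a -> ge z x -> ge B b -> ge (Pw A z B) (Pw a x b).
Proof. intros HA Hz HB. unfold Pw. apply ge_mul; auto. apply ge_mul; auto. apply ge_mul; auto. apply ge_mul; auto. Qed.

Lemma Pw_idem a : Pw a a a = a.
Proof. unfold Pw. rewrite !mI. reflexivity. Qed.

Lemma ge_Pw s a : ge s (Pw a a a) -> ge s a.
Proof. rewrite Pw_idem; auto. Qed.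

Lemma sg_refl a : sg a a.
Proof. exists a. rewrite Pw_idem. split; apply ge_refl. Qed.

Lemma sg_sym a b : sg a b -> sg b a.
Proof. intros [x [H1 H2]]. exists x. split; auto. Qed.

Lemma trans_half a b c z : ge z b -> ge (Pw a z b) a -> ge (Pw b z c) b -> ge (Pw a z c) a.
Proof.
  intros Hzb H1 H2.
  assert (zbz : ge z (z*(b*z))).
  { apply ge_eq with (z*(z*z)) (z*(b*z)); [rewrite !mI; reflexivity|reflexivity|].
    apply ge_mul. apply ge_refl. apply ge_mul; auto. apply ge_refl. }
  apply ge_trans with (a*(z*((Pw b z c)*(z*a)))).
  - apply ge_eq with (a*(z*(c*(z*a)))) (a*((z*(b*z))*(c*((z*(b*z))*a)))).
    + reflexivity.
    + unfold Pw. mn. reflexivity.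
    + apply ge_mulL. apply ge_mul; auto. apply ge_mulL. apply ge_mulR. auto.
  - apply ge_trans with (Pw a z b); auto.
    unfold Pw at 2. apply ge_mulL, ge_mulL, ge_mulR. auto.
Qed.

Lemma mono_w a b x w : ge w x -> ge (Pw a x b) a -> ge (Pw a w b) a.
Proof. intros Hw H. apply ge_trans with (Pw a x b); auto. apply Pw_mono; auto; apply ge_refl. Qed.

Lemma sg_trans a b c : sg a b -> sg b c -> sg a c.
Proof.
  intros [x [H1 H2]] [y [H3 H4]].
  set (z := (x + b) + y).
  assert (zx : ge z x) by (apply ge_trans with (x+b); [apply ge_l|apply ge_l]).
  assert (zb : ge z b) by (apply ge_trans with (x+b); [apply ge_l|apply ge_r]).
  assert (zy : ge z y) by apply ge_r.
  exists z. split.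
  - exact (trans_half a b c z zb (mono_w a b x z zx H1) (mono_w b c y z zy H3)).
  - exact (trans_half c b a z zb (mono_w c b y z zy H4) (mono_w b a x z zx H2)).
Qed.

Lemma K_r a b c x : ge (Pw a x b) a -> ge (Pw (a*c) x (b*c)) (a*c).
Proof.
  intro H.
  apply ge_trans with ((a*c)*((Pw a x b)*c)).
  - apply ge_trans with (a*(c*((x*b)*((x*a)*c)))).
    + apply ge_eq with (a*(c*((x*b)*(c*((x*a)*c))))) (a*(c*((x*b)*((x*a)*c)))).
      unfold Pw; mn; reflexivity. reflexivity.
      apply ge_mulL, reg_easy.
    + apply ge_eq with ((a*(c*((x*(b*x))*a)))*c) ((a*(c*(a*((x*(b*x))*a))))*c).
      mn; reflexivity. unfold Pw; mn; reflexivity.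
      apply ge_mulR, reg_hard.
  - apply ge_eq with ((a*c)*((Pw a x b)*c)) ((a*c)*(a*c)); [reflexivity|apply mI|].
    apply ge_mulL, ge_mulR, H.
Qed.

Lemma K_l a b c x : ge (Pw a x b) a -> ge (Pw (c*a) x (c*b)) (c*a).
Proof.
  intro H.
  apply ge_trans with ((c*(Pw a x b))*(c*a)).
  - apply ge_trans with ((c*((a*x)*((b*x)*c)))*a).
    + apply ge_eq with ((c*((a*x)*(c*((b*x)*c))))*a) ((c*((a*x)*((b*x)*c)))*a).
      unfold Pw; mn; reflexivity. reflexivity.
      apply ge_mulR, reg_easy.
    + apply ge_eq with (c*(a*((x*(b*x))*(c*a)))) (c*(a*((x*(b*x))*(a*(c*a))))).
      mn; reflexivity. unfold Pw; mn; reflexivity.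
      apply ge_mulL, reg_hard.
  - apply ge_eq with ((c*(Pw a x b))*(c*a)) ((c*a)*(c*a)); [reflexivity|apply mI|].
    apply ge_mulR, ge_mulL, H.
Qed.

Lemma sg_mulR a b c : sg a b -> sg (a*c) (b*c).
Proof. intros [x [H1 H2]]. exists x. split; apply K_r; auto. Qed.
Lemma sg_mulL a b c : sg a b -> sg (c*a) (c*b).
Proof. intros [x [H1 H2]]. exists x. split; apply K_l; auto. Qed.

Lemma A_half A a B b c x z : ge A a -> ge A c -> ge B b -> ge B c -> ge z x -> ge z c ->
  ge (Pw a x b) a -> ge (Pw A z B) a /\ ge (Pw A z B) c.
Proof.
  intros. split.
  - apply ge_trans with (Pw a x b); auto. apply Pw_mono; auto.
  - apply (ge_Pw _ c). apply Pw_mono; auto.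
Qed.

Lemma sg_addR a b c : sg a b -> sg (a+c) (b+c).
Proof.
  intros [x [H1 H2]]. exists (c + x). split.
  - destruct (A_half (a+c) a (b+c) b c x (c+x)) as [E1 E2]; auto using ge_l, ge_r.
    apply ge_sum; auto.
  - destruct (A_half (b+c) b (a+c) a c x (c+x)) as [E1 E2]; auto using ge_l, ge_r.
    apply ge_sum; auto.
Qed.

Lemma sg_addL a b c : sg a b -> sg (c+a) (c+b).
Proof.
  intros [x [H1 H2]]. exists (c + x). split.
  - destruct (A_half (c+a) a (c+b) b c x (c+x)) as [E1 E2]; auto using ge_l, ge_r.
    apply ge_sum; auto.
  - destruct (A_half (c+b) b (c+a) a c x (c+x)) as [E1 E2]; auto using ge_l, ge_r.
    apply ge_sum; auto.
Qed.

Lemma sg_comm_add x y : sg (x+y) (y+x).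
Proof.
  exists (x+y). split.
  - apply ge_sum.
    + apply (ge_Pw _ x). apply Pw_mono; auto using ge_l, ge_r.
    + apply (ge_Pw _ y). apply Pw_mono; auto using ge_l, ge_r.
  - apply ge_sum.
    + apply (ge_Pw _ y). apply Pw_mono; auto using ge_l, ge_r.
    + apply (ge_Pw _ x). apply Pw_mono; auto using ge_l, ge_r.
Qed.

Lemma sg_comm_mul x y : sg (x*y) (y*x).
Proof.
  exists x. split.
  - apply ge_eq with (x*y) (x*y); [|reflexivity|apply ge_refl].
    unfold Pw. mn. rewrite !ms1. rewrite ms2r. rewrite ms2. reflexivity.
  - apply ge_eq with (y*x) (y*x); [|reflexivity|apply ge_refl].
    unfold Pw. mn. rewrite !ms1. rewrite ms2r. rewrite ms2. reflexivity.
Qed.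

Lemma sg_absorb x y : sg (x + x*y) x.
Proof.
  exists x. split.
  - apply ge_sum.
    + apply (ge_Pw _ x). apply Pw_mono; auto using ge_l, ge_refl.
    + apply ge_eq with (Pw (x + x*y) x x) (x*(x*(x*(x*(x*y))))).
      reflexivity. rewrite !ms1; reflexivity.
      unfold Pw. apply ge_mul. apply ge_l. apply ge_mul. apply ge_refl.
      apply ge_mul. apply ge_refl. apply ge_mul. apply ge_refl. apply ge_r.
  - apply (ge_Pw _ x). apply Pw_mono; auto using ge_l, ge_refl.
Qed.

End SR.

Theorem theorem2p3 (S : Type) (add mul : S -> S -> S)
  (HS : idem_semiring add mul) :
  dl_congruence add mul (sigma_star add mul) /\
  (forall rho : relation S, dl_congruence add mul rho ->
     forall a b, sigma_star add mul a b -> rho a b).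
Proof.
  pose proof (sg_iff S add mul) as E.
  split.
  - split; [split; [|split]|split; [|split]].
    + constructor.
      * intro a. apply E. apply (sg_refl S add mul HS).
      * intros a b c H1 H2. apply E. apply E in H1. apply E in H2. eapply (sg_trans S add mul HS); eauto.
      * intros a b H1. apply E. apply E in H1. apply (sg_sym S add mul); auto.
    + intros a b c d H1 H2. apply E. apply E in H1. apply E in H2.
      apply (sg_trans S add mul HS) with (add b c). apply (sg_addR S add mul HS); auto. apply (sg_addL S add mul HS); auto.
    + intros a b c d H1 H2. apply E. apply E in H1. apply E in H2.
      apply (sg_trans S add mul HS) with (mul b c). apply (sg_mulR S add mul HS); auto. apply (sg_mulL S add mul HS); auto.
    + intros x y. apply E. apply (sg_comm_add S add mul HS).
    + intros x y. apply E. apply (sg_comm_mul S add mul HS).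
    + intros x y. apply E. apply (sg_absorb S add mul HS).
  - intros rho [[Heq [Hadd Hmul]] [Hca [Hcm Hab]]] a b [x [Hp Hq]].
    destruct Heq as [Rr Rt Rs].
    assert (mA := mul_assoc HS). assert (mI := mul_idem HS). assert (aA := add_assoc HS). assert (aI := add_idem HS).
    assert (cL : forall w u v, rho u v -> rho (mul w u) (mul w v)) by (intros; apply Hmul; auto).
    assert (sw : forall u v w, rho (mul u (mul v w)) (mul v (mul u w))).
    { intros u v w. rewrite (mA u v w), (mA v u w). apply Hmul; auto. }
    assert (key : forall p c y, p = add (add p c) p -> p = mul c y -> rho p c).
    { intros p c y H1 H2.
      apply Rt with (add c p).
      - apply Rt with (add p (add p c)).
        + rewrite H1 at 1. apply Hca.
        + rewrite aA, aI. apply Hca.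
      - rewrite H2. apply Hab. }
    assert (Ra : rho (mul a (mul x (mul b (mul x a)))) a) by (eapply key; [exact Hp|reflexivity]).
    assert (Rb : rho (mul b (mul x (mul a (mul x b)))) b) by (eapply key; [exact Hq|reflexivity]).
    assert (Pa : rho (mul a (mul x (mul b (mul x a)))) (mul a (mul b x))).
    { apply Rt with (mul a (mul x (mul b (mul a x)))). apply cL, cL, cL, Hcm.
      apply Rt with (mul a (mul x (mul a (mul b x)))). apply cL, cL, sw.
      apply Rt with (mul a (mul a (mul x (mul b x)))). apply cL, sw.
      rewrite (mA a a), mI.
      apply cL. apply Rt with (mul b (mul x x)). apply sw. rewrite mI. apply Rr. }
    assert (Pb : rho (mul b (mul x (mul a (mul x b)))) (mul a (mul b x))).
    { apply Rt with (mul b (mul x (mul a (mul b x)))). apply cL, cL, cL, Hcm.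
      apply Rt with (mul b (mul x (mul b (mul a x)))). apply cL, cL, sw.
      apply Rt with (mul b (mul b (mul x (mul a x)))). apply cL, sw.
      rewrite (mA b b), mI.
      apply Rt with (mul b (mul a x)). apply cL. apply Rt with (mul a (mul x x)). apply sw. rewrite mI. apply Rr.
      apply sw. }
    apply Rt with (mul a (mul x (mul b (mul x a)))). apply Rs; exact Ra.
    apply Rt with (mul a (mul b x)). exact Pa.
    apply Rt with (mul b (mul x (mul a (mul x b)))). apply Rs; exact Pb. exact Rb.
Qed.
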